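(* Let $T$ be a $k$-tree and $C$ a $k$-clique of $T$. Then $$k+\frac{\log_2 N(T;C)}{2}\le \mu(T;C)\le \frac{N(T;C)+2k-1}{2}.$$ The lower bound holds with equality if and only if $T$ is a $k$-star and $C$ is its base $k$-clique. If $T$ has at least $k+1$ vertices, the upper bound holds with equality if and only if $T$ is a path-type $k$-tree and $C$ is simplicial.
   Context: A $k$-tree is defined recursively: $K_k$ is a $k$-tree, and if $T$ is a $k$-tree then so is the graph obtained by joining a new vertex to all vertices of some $k$-clique of $T$; there are no others. A sub-$k$-tree is a subgraph that is itself a $k$-tree. $N(T;C)$ is the number of sub-$k$-trees containing $C$ and $\mu(T;C)$ is their average number of vertices. A $k$-star is a $k$-tree consisting of a $k$-clique (its base $k$-clique) together with some number $m\ge 0$ of further pairwise non-adjacent vertices each joined to all vertices of the base (for $m=1$, any $k$-clique of $K_{k+1}$ may serve as base). A $k$-leaf is a vertex lying in exactly one $(k+1)$-clique; a simplicial $k$-clique is one containing a $k$-leaf. A path-type $k$-tree is a $k$-tree that is $K_k$, $K_{k+1}$, or has exactly two $k$-leaves. *)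

(* Defs.v *)
From mathcomp Require Import all_boot.
From mathcomp Require Import boolp.
From Stdlib Require Import Reals.

Set Implicit Arguments.
Unset Strict Implicit.
Unset Printing Implicit Defensive.

Section KTrees.
Variable V : finType.

(* A graph is a pair (S, E): vertex set S and edge set E, edges being
   2-element subsets of V. *)

Definition cedges (X : {set V}) : {set {set V}} :=
  [set e in powerset X | #|e| == 2].

Definition is_clique (S : {set V}) (E : {set {set V}}) (X : {set V}) : bool :=
  (X \subset S) &&
  [forall u in X, forall w in X, (u != w) ==> ([set u; w] \in E)].

Definition nclique (S : {set V}) (E : {set {set V}}) (n : nat) (X : {set V}) : bool :=
  is_clique S E X && (#|X| == n).

Definition is_K (S : {set V}) (E : {set {set V}}) (n : nat) : bool :=
  (#|S| == n) && (E == cedges S).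

Inductive ktree (k : nat) : {set V} -> {set {set V}} -> Prop :=
| ktree_base (S : {set V}) : #|S| = k -> ktree k S (cedges S)
| ktree_step (S : {set V}) (E : {set {set V}}) (C : {set V}) (v : V) :
    ktree k S E -> nclique S E k C -> v \notin S ->
    ktree k (v |: S) (E :|: [set [set v; u] | u in C]).

Definition subktrees (k : nat) (S : {set V}) (E : {set {set V}}) (C : {set V})
  : {set {set V} * {set {set V}}} :=
  [set p : {set V} * {set {set V}} | `[< (p.1 \subset S) /\ (p.2 \subset E) /\ ktree k p.1 p.2 /\
               (C \subset p.1) /\ (cedges C \subset p.2) >]].

Definition ktN k S E C : nat := #|subktrees k S E C|.

Definition ktmu k S E C : R :=
  (INR (\sum_(p in subktrees k S E C) #|p.1|) / INR (ktN k S E C))%R.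

Definition is_kstar (k : nat) (S : {set V}) (E : {set {set V}}) (B : {set V}) : bool :=
  (B \subset S) && (#|B| == k) &&
  (E == cedges B :|: [set [set u; b] | u in S :\: B, b in B]).

Definition kleaf (k : nat) (S : {set V}) (E : {set {set V}}) (v : V) : bool :=
  (v \in S) && (#|[set X : {set V} | nclique S E k.+1 X && (v \in X)]| == 1).

Definition simplicial (k : nat) (S : {set V}) (E : {set {set V}}) (C : {set V}) : bool :=
  [exists v in C, kleaf k S E v].

Definition path_type (k : nat) (S : {set V}) (E : {set {set V}}) : bool :=
  is_K S E k || is_K S E k.+1 || (#|[set v in S | kleaf k S E v]| == 2).

End KTrees.

Definition log2 (x : R) : R := (ln x / ln 2)%R.

(* Main.v *)
Require Import Defs.
From mathcomp Require Import all_boot.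
From mathcomp Require Import boolp.
From mathcomp Require Import zify.
From Stdlib Require Import Reals Lra.

Set Implicit Arguments.
Unset Strict Implicit.
Unset Printing Implicit Defensive.


Section KT.
Variable V : finType.
Implicit Types (X Y Z S : {set V}) (E : {set {set V}}).

Lemma card_cedges X : #|cedges X| = 'C(#|X|, 2).
Proof. rewrite -cards_draws; apply: eq_card => A; by rewrite !inE. Qed.

Lemma in_cedges2 X u w :
  ([set u; w] \in cedges X) = [&& u \in X, w \in X & u != w].
Proof.
rewrite !inE cards2 subUset !sub1set.
by case: (u != w); rewrite ?andbT ?andbF.
Qed.

Lemma cedgesP X e :
  reflect (exists u w, [/\ u \in X, w \in X, u != w & e = [set u; w]]) (e \in cedges X).
Proof.
apply: (iffP idP).
  rewrite !inE => /andP [sub /cards2P [u [w [uw ee]]]].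
  exists u, w; move: sub; rewrite ee subUset !sub1set => /andP [uX wX].
  by split.
by move=> [u [w [uX wX uw ->]]]; rewrite in_cedges2 uX wX.
Qed.

Lemma cedgesS X Y : X \subset Y -> cedges X \subset cedges Y.
Proof.
move=> XY; apply/subsetP => e /cedgesP [u [w [uX wX uw ->]]].
by rewrite in_cedges2 (subsetP XY _ uX) (subsetP XY _ wX).
Qed.

Definition nb E w : {set V} := [set u | [set w; u] \in E].
Definition cliq E X := [forall u in X, forall w in X, (u != w) ==> ([set u; w] \in E)].

Lemma cliqP E X : reflect (forall u w, u \in X -> w \in X -> u != w -> [set u; w] \in E)
  (cliq E X).
Proof.
apply: (iffP forall_inP).
  by move=> H u w uX wX uw; move/forall_inP: (H u uX) => /(_ w wX); rewrite uw.
by move=> H u uX; apply/forall_inP => w wX; apply/implyP; apply: H.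
Qed.

Lemma is_cliqueE S E X : is_clique S E X = (X \subset S) && cliq E X.
Proof. by []. Qed.

Lemma cliqS E X Y : Y \subset X -> cliq E X -> cliq E Y.
Proof.
move=> YX /cliqP H; apply/cliqP => u w uY wY; apply: H; exact: (subsetP YX).
Qed.

Lemma cliqE E E' X : E \subset E' -> cliq E X -> cliq E' X.
Proof.
move=> EE /cliqP H; apply/cliqP => u w uX wX uw; apply: (subsetP EE); exact: H.
Qed.

Lemma cliq_cedges E X : cliq E X -> cedges X \subset E.
Proof.
move/cliqP => H; apply/subsetP => e /cedgesP [u [w [uX wX uw ->]]]; exact: H.
Qed.

Lemma cedges_cliq E X : cedges X \subset E -> cliq E X.
Proof.
move=> H; apply/cliqP => u w uX wX uw; apply: (subsetP H).
by rewrite in_cedges2 uX wX.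
Qed.

Lemma set2_inj (w u u' : V) : u != w -> u' != w -> [set w; u] = [set w; u'] -> u = u'.
Proof.
move=> uw u'w eq; have : u \in [set w; u'] by rewrite -eq !inE eqxx orbT.
by rewrite !inE (negbTE uw) => /eqP.
Qed.

Lemma card_star (w : V) (D : {set V}) : w \notin D -> #|[set [set w; u] | u in D]| = #|D|.
Proof.
move=> wD; apply: card_in_imset => u u' uD u'D; apply: set2_inj.
- by apply: contraNneq wD => <-.
- by apply: contraNneq wD => <-.
Qed.

Lemma Ecedges_add E X w : w \notin X ->
  E :&: cedges (w |: X) = (E :&: cedges X) :|: [set [set w; u] | u in nb E w :&: X].
Proof.
move=> wX; apply/setP => e; rewrite in_setU !in_setI; apply/idP/idP.
  move=> /andP [eE /cedgesP [a [b [aX bX ab ee]]]].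
  move: aX bX; rewrite !in_setU1.
  case: (eqVneq a w) => [aw | aw] /=.
    move=> _ bX; apply/orP; right; apply/imsetP; exists b.
      rewrite in_setI inE -aw -ee eE /=.
      by move: bX; rewrite -aw eq_sym (negbTE ab).
    by rewrite ee aw.
  move=> aX; case: (eqVneq b w) => [bw | bw] /=.
    move=> _; apply/orP; right; apply/imsetP; exists a.
      by rewrite in_setI aX andbT inE -bw setUC -ee.
    by rewrite ee bw setUC.
  by move=> bX; rewrite eE ee in_cedges2 aX bX ab.
case/orP.
  move=> /andP [eE eC]; rewrite eE /=; apply: (subsetP (cedgesS _)) eC.
  exact: subsetUr.
move=> /imsetP [u uD ee]; move: uD; rewrite in_setI inE => /andP [wuE uX]; rewrite ee wuE /=.
rewrite in_cedges2 setU11 in_setU1 uX orbT /=.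
by apply/eqP => wu; move: wX; rewrite wu uX.
Qed.

Lemma card_Ecedges_add E X w : w \notin X ->
  #|E :&: cedges (w |: X)| = #|E :&: cedges X| + #|nb E w :&: X|.
Proof.
move=> wX; rewrite Ecedges_add // -(@card_star w (nb E w :&: X)); last first.
  by rewrite in_setI negb_and wX orbT.
rewrite -cardsUI; set I := (_ :&: _ :&: _); suff -> : I = set0 by rewrite cards0 addn0.
apply/setP => e; rewrite !in_setI in_set0.
apply/negbTE; apply/negP => /andP [/andP [_ eC] /imsetP [u _ ee]].
by move: eC; rewrite ee in_cedges2 (negbTE wX).
Qed.

End KT.


Section KT2.
Variable V : finType.
Implicit Types (X Y Z S C D : {set V}) (E : {set {set V}}) (k : nat).

Lemma ncliqueP S E k C : nclique S E k C -> [/\ C \subset S, cliq E C & #|C| = k].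
Proof. by rewrite /nclique is_cliqueE => /andP [/andP [h1 h2] /eqP h3]. Qed.

Lemma ncliqueI S E k C : C \subset S -> cliq E C -> #|C| = k -> nclique S E k C.
Proof. by move=> h1 h2 h3; rewrite /nclique is_cliqueE h1 h2 h3 eqxx. Qed.

Lemma ktree_sub k S E : ktree k S E -> E \subset cedges S.
Proof.
elim => [S0 _ | S0 E0 C0 v _ IH /ncliqueP [CS _ _] vS]; first exact: subxx.
rewrite subUset; apply/andP; split.
  apply: subset_trans IH (cedgesS _); exact: subsetUr.
apply/subsetP => e /imsetP [u uC ->]; rewrite in_cedges2 setU11 in_setU1.
rewrite (subsetP CS _ uC) orbT /=.
by apply/eqP => vu; move: vS; rewrite vu (subsetP CS _ uC).
Qed.

Lemma edge_in k S E u w : ktree k S E -> [set u; w] \in E -> [/\ u \in S, w \in S & u != w].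
Proof.
move=> kt /(subsetP (ktree_sub kt)); rewrite in_cedges2 => /and3P [h1 h2 h3]; by split.
Qed.

Lemma nb_step S E (D : {set V}) v : E \subset cedges S -> D \subset S -> v \notin S ->
  nb (E :|: [set [set v; u] | u in D]) v = D.
Proof.
move=> ES DS vS; apply/setP => u; rewrite inE in_setU; apply/idP/idP.
  case/orP.
    by move/(subsetP ES); rewrite in_cedges2 (negbTE vS).
  move=> /imsetP [u' u'D ee].
  have u'v : u' != v by apply/eqP => e; move: vS; rewrite -e (subsetP DS _ u'D).
  have uv : u != v.
    apply/eqP => e; move: ee; rewrite e setUid => ee.
    have : u' \in [set v] by rewrite ee !inE eqxx orbT.
    by rewrite inE (negbTE u'v).
  by rewrite (set2_inj uv u'v ee).
by move=> uD; apply/orP; right; apply/imsetP; exists u.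
Qed.

Lemma step_cedges E (D : {set V}) v X : v \notin X ->
  (E :|: [set [set v; u] | u in D]) :&: cedges X = E :&: cedges X.
Proof.
move=> vX; apply/setP => e; rewrite !in_setI in_setU.
case eE: (e \in E) => //=; apply/negbTE/negP => /andP [/imsetP [u _ ->]].
by rewrite in_cedges2 (negbTE vX).
Qed.

Inductive bld (k : nat) E (C : {set V}) : {set V} -> Prop :=
| bld0 : bld k E C C
| bldS X w : bld k E C X -> w \notin X -> #|nb E w :&: X| = k ->
    cliq E (nb E w :&: X) -> bld k E C (w |: X).

Lemma bld_supC k E C X : bld k E C X -> C \subset X.
Proof. elim => [|X0 w _ IH _ _ _]; first exact: subxx. exact: subset_trans IH (subsetUr _ _). Qed.

Lemma bld_trans k E C Y Z : bld k E C Y -> bld k E Y Z -> bld k E C Z.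
Proof. move=> h; elim => // X w _ IH wX h1 h2; exact: bldS. Qed.

Lemma bld_sub k S E C X : ktree k S E -> 0 < k -> C \subset S -> bld k E C X -> X \subset S.
Proof.
move=> kt k0 CS; elim => // X0 w _ IH _ hk _.
rewrite subUset IH andbT sub1set.
have : 0 < #|nb E w :&: X0| by rewrite hk.
case/card_gt0P => u; rewrite in_setI inE => /andP [/(edge_in kt) [] //].
Qed.

Lemma bld_ext k S E E' C X :
  (forall a b, a \in S -> b \in S -> ([set a; b] \in E) = ([set a; b] \in E')) ->
  bld k E C X -> X \subset S -> bld k E' C X.
Proof.
move=> hE; elim => [|X0 w _ IH wX hk hc]; first by move=> _; exact: bld0.
rewrite subUset sub1set => /andP [wS X0S].
have nbeq : nb E w :&: X0 = nb E' w :&: X0.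
  apply/setP => u; rewrite !in_setI !inE.
  case uX: (u \in X0); rewrite ?andbF ?andbT //.
  exact: hE (subsetP X0S _ uX).
apply: bldS => //; first exact: IH; first by rewrite -nbeq.
rewrite -nbeq; move/cliqP: hc => hc; apply/cliqP => a b aN bN ab.
have aS : a \in S by move: aN; rewrite in_setI => /andP [_ /(subsetP X0S)].
have bS : b \in S by move: bN; rewrite in_setI => /andP [_ /(subsetP X0S)].
by rewrite -hE //; apply: hc.
Qed.

Lemma binom_id k : 'C(k, 2) + 'C(k.+1, 2) = k * k.
Proof.
elim: k => // k IH.
have h1 : 'C(k.+1, 2) = 'C(k, 2) + k by rewrite binS bin1.
have h2 : 'C(k.+2, 2) = 'C(k.+1, 2) + k.+1 by rewrite binS bin1.
lia.
Qed.

Lemma bld_count k E C X : cliq E C -> #|C| = k -> bld k E C X ->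
  #|E :&: cedges X| + 'C(k.+1, 2) = k * #|X|.
Proof.
move=> cC Ck; elim => [|X0 w _ IH wX hk _].
  by rewrite (setIidPr (cliq_cedges cC)) card_cedges Ck binom_id.
rewrite card_Ecedges_add // cardsU1 wX hk; lia.
Qed.

Lemma ktree_count_le k S E X : ktree k S E -> X \subset S -> k <= #|X| ->
  #|E :&: cedges X| + 'C(k.+1, 2) <= k * #|X|.
Proof.
move=> kt; elim: kt X => [S0 hS0 | S0 E0 D v kt IH /ncliqueP [DS _ Dk] vS] X XS kX.
  have -> : X = S0 by apply/eqP; rewrite eqEcard XS hS0 kX.
  by rewrite setIid card_cedges hS0 binom_id.
have ES := ktree_sub kt.
case vX: (v \in X); last first.
  have XS0 : X \subset S0.
    apply/subsetP => x xX; move: (subsetP XS _ xX); rewrite in_setU1.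
    by case: eqP => [e | _] //; move: vX; rewrite -e xX.
  by rewrite step_cedges ?vX // IH.
set X0 := X :\ v.
have eX : X = v |: X0 by rewrite setD1K.
have vX0 : v \notin X0 by rewrite !inE eqxx.
have X0S : X0 \subset S0.
  apply/subsetP => x; rewrite !inE => /andP [xv xX]; move: (subsetP XS _ xX).
  by rewrite in_setU1 (negbTE xv).
rewrite eX card_Ecedges_add // step_cedges // (nb_step ES DS vS) cardsU1 vX0.
have hD : #|D :&: X0| <= k by rewrite -Dk; apply: subset_leq_card; exact: subsetIl.
have hD2 : #|D :&: X0| <= #|X0| by apply: subset_leq_card; exact: subsetIr.
have hX : #|X| = #|X0|.+1 by rewrite eX cardsU1 vX0.
case: (leqP k #|X0|) => kX0.
  have := IH X0 X0S kX0; lia.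
have hk : k = #|X0|.+1 by lia.
have h1 : #|E0 :&: cedges X0| <= 'C(#|X0|, 2).
  rewrite -card_cedges; apply: subset_leq_card; exact: subsetIr.
have h2 : 'C(#|X0|.+1, 2) = 'C(#|X0|, 2) + #|X0| by rewrite binS bin1.
have h3 := binom_id #|X0|.+1.
rewrite hk in h3 *; lia.
Qed.

End KT2.


Section Reroot.
Variable V : finType.
Implicit Types (X Y Z S C D : {set V}) (E : {set {set V}}) (k : nat).

Lemma in_nb E (w u : V) : (u \in nb E w) = ([set w; u] \in E).
Proof. by rewrite inE. Qed.

Lemma reroot k S E : ktree k S E -> forall C, nclique S E k C -> bld k E C S.
Proof.
elim => [S0 hS0 | S0 E0 D v kt IH hD vS] C hC.
  have [CS _ Ck] := ncliqueP hC.
  have -> : C = S0 by apply/eqP; rewrite eqEcard CS hS0 Ck leqnn.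
  exact: bld0.
set E' := E0 :|: _.
have ES := ktree_sub kt.
have [DS cD Dk] := ncliqueP hD.
have nbv := nb_step ES DS vS.
have [CS' cC' Ck] := ncliqueP hC.
have E0E' : E0 \subset E' by exact: subsetUl.
have hE : forall a b, a \in S0 -> b \in S0 -> ([set a; b] \in E0) = ([set a; b] \in E').
  move=> a b aS bS; rewrite /E' in_setU; case: (_ \in E0) => //=.
  apply/esym/negbTE/negP => /imsetP [u _ ee].
  have : v \in [set a; b] by rewrite ee !inE eqxx.
  by rewrite !inE => /orP [] /eqP e; move: vS; rewrite e ?aS ?bS.
have vD : v \notin D by apply: contra vS; exact: (subsetP DS).
case vC: (v \in C); last first.
  have CS0 : C \subset S0.
    apply/subsetP => x xC; move: (subsetP CS' _ xC); rewrite in_setU1.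
    by case: eqP => [e | _] //; move: vC; rewrite -e xC.
  have cC0 : cliq E0 C.
    move/cliqP: cC' => h; apply/cliqP => a b aC bC ab.
    rewrite hE ?(subsetP CS0) //; exact: h.
  have b1 := IH C (ncliqueI CS0 cC0 Ck).
  have b2 := bld_ext hE b1 (subxx _).
  apply: bldS => //; rewrite nbv (setIidPl DS) //.
  exact: cliqE E0E' cD.
have CvD : C :\ v \subset D.
  apply/subsetP => x; rewrite in_setD1 => /andP [xv xC].
  rewrite -nbv inE; move/cliqP: cC' => h; apply: h => //; by rewrite eq_sym.
have cCv : #|C :\ v| = k.-1 by move: (cardsD1 v C); rewrite vC Ck; lia.
have : 0 < #|D :\: (C :\ v)|.
  have kpos : 0 < k by rewrite -Ck; apply/card_gt0P; exists v; rewrite vC.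
  rewrite cardsD (setIidPr CvD) cCv Dk; lia.
case/card_gt0P => d; rewrite in_setD => /andP [dCv dD].
have dv : d != v by apply/eqP => e; move: vD; rewrite -e dD.
have dC : d \notin C by move: dCv; rewrite in_setD1 dv.
have eCv : C :\ v = D :\ d.
  apply/eqP; rewrite eqEcard; apply/andP; split.
    apply/subsetP => x xC; rewrite in_setD1 (subsetP CvD _ xC) andbT.
    by apply/eqP => e; move: dCv; rewrite -e xC.
  by have h := cardsD1 d D; rewrite dD Dk in h; rewrite cCv h add1n /=.
have eC : C = v |: (D :\ d) by rewrite -eCv setD1K.
have step1 : bld k E' C (v |: D).
  have -> : v |: D = d |: C by rewrite eC setUCA setD1K.
  apply: bldS; first exact: bld0; first exact: dC.
    have -> : nb E' d :&: C = C; last exact: Ck.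
    apply/setIidPr/subsetP => x xC; rewrite inE.
    case: (eqVneq x v) => [-> | xv].
      by rewrite setUC /E' in_setU; apply/orP; right; apply/imsetP; exists d.
    have xD : x \in D :\ d by rewrite -eCv in_setD1 xv.
    move: xD; rewrite in_setD1 => /andP [xd xD].
    apply: (subsetP E0E'); move/cliqP: cD => h; apply: h => //; by rewrite eq_sym.
  have -> : nb E' d :&: C = C; last exact: cC'.
  apply/setIidPr/subsetP => x xC; rewrite inE.
  case: (eqVneq x v) => [-> | xv].
    by rewrite setUC /E' in_setU; apply/orP; right; apply/imsetP; exists d.
  have xD : x \in D :\ d by rewrite -eCv in_setD1 xv.
  move: xD; rewrite in_setD1 => /andP [xd xD].
  apply: (subsetP E0E'); move/cliqP: cD => h; apply: h => //; by rewrite eq_sym.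
have shift : forall X, bld k E0 D X -> X \subset S0 -> bld k E' (v |: D) (v |: X).
  move=> X; elim => [_ | X0 w b0 IH0 wX0 hk hc]; first exact: bld0.
  rewrite subUset sub1set => /andP [wS X0S].
  have wv : w != v by apply/eqP => e; move: vS; rewrite -e wS.
  have DX0 := bld_supC b0.
  have vX0 : v \notin X0 by apply: contra vS; exact: (subsetP X0S).
  have wvE : [set w; v] \notin E'.
    rewrite /E' in_setU negb_or; apply/andP; split.
      by apply/negP => /(edge_in kt) [_]; rewrite (negbTE vS).
    apply/negP => /imsetP [u' u'D ee].
    have : w \in [set v; u'] by rewrite -ee !inE eqxx.
    rewrite !inE (negbTE wv) /= => /eqP e; move: wX0.
    by rewrite e (subsetP DX0 _ u'D).
  have nbeq : nb E' w :&: (v |: X0) = nb E0 w :&: X0.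
    apply/setP => u; rewrite !in_setI in_setU1 !in_nb.
    case: (eqVneq u v) => [-> | uv] /=.
      by rewrite (negbTE wvE) (negbTE vX0) andbF.
    case uX: (u \in X0); rewrite ?andbF ?andbT //.
    by rewrite -hE // (subsetP X0S _ uX).
  rewrite setUCA; apply: bldS.
  - exact: IH0.
  - by rewrite in_setU1 negb_or wv.
  - by rewrite nbeq.
  - rewrite nbeq; exact: cliqE E0E' hc.
have b1 := shift S0 (IH D hD) (subxx _).
exact: bld_trans step1 b1.
Qed.

End Reroot.
Section RealAux.
Local Open Scope R_scope.

Lemma ln_le_sub1 t : 0 < t -> ln t <= t - 1.
Proof. move=> tp; have := exp_ineq1_le (ln t); rewrite exp_ln //; lra. Qed.

Lemma ln2_pos : 0 < ln 2.
Proof. have := ln_lt_2; lra. Qed.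

Lemma ln_split s x : 0 < s -> 0 < x -> ln (s * / (2 * x)) = ln s - ln 2 - ln x.
Proof.
move=> sp xp.
rewrite ln_mult; [|lra|apply: Rinv_0_lt_compat; lra].
rewrite ln_Rinv; [|lra]. rewrite ln_mult; lra.
Qed.

Lemma RI_aux x s : 0 < x -> 0 < s -> x * ln s - x * ln 2 - x * ln x <= s / 2 - x.
Proof.
move=> xp sp.
have h := @ln_le_sub1 (s * / (2 * x)) ltac:(apply: Rmult_lt_0_compat; [lra | apply: Rinv_0_lt_compat; lra]).
rewrite ln_split // in h.
have h2 := Rmult_le_compat_l x _ _ (Rlt_le _ _ xp) h.
have e : x * (s * / (2 * x) - 1) = s / 2 - x by field; lra.
rewrite e in h2; lra.
Qed.

Lemma RI x y : 0 < x -> x <= y ->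
  (x + y) * ln (x + y) <= x * ln x + y * ln y + 2 * ln 2 * y /\
  ((x + y) * ln (x + y) = x * ln x + y * ln y + 2 * ln 2 * y -> x = y).
Proof.
move=> xp xy.
have sp : 0 < x + y by lra.
have hx := @RI_aux x (x + y) xp sp.
have hy := @RI_aux y (x + y) ltac:(lra) sp.
have l2 := ln2_pos.
have hl : 0 <= (y - x) * ln 2 by apply: Rmult_le_pos; lra.
set L := ln (x + y) in hx hy *.
have e : (x + y) * L = x * L + y * L by ring.
split; first by lra.
move=> eq.
have : (y - x) * ln 2 = 0 by lra.
case/Rmult_integral => h; lra.
Qed.

Lemma RI_eq x : 0 < x -> (x + x) * ln (x + x) = x * ln x + x * ln x + 2 * ln 2 * x.
Proof.
move=> xp; have -> : x + x = 2 * x by ring.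
rewrite ln_mult; [ring | lra | lra].
Qed.
End RealAux.



Section AbsLow.
Variable V : finType.
Implicit Types (X Y B W : {set V}) (F : {set {set V}}).

Definition AF F B := [/\ B \in F, forall X, X \in F -> B \subset X,
  forall X Y, X \in F -> Y \in F -> X :|: Y \in F &
  forall X, X \in F -> X != B -> exists2 x, x \in X :\: B & X :\ x \in F].

Definition cube B W : {set {set V}} := [set X : {set V} | (B \subset X) && (X \subset B :|: W)].
Definition sB F B := \sum_(X in F) #|X :\: B|.

Lemma INR_add (a b : nat) : INR (addn a b) = (INR a + INR b)%R. Proof. exact: plus_INR. Qed.

Lemma atom F B X : AF F B -> X \in F -> X != B -> exists2 a, a \notin B & a |: B \in F.
Proof.
case=> FB Fsup Fun Facc; move: {2}#|X| (leqnn #|X|) => n; elim: n X => [|n IH] X hX XF XB.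
  have [x xXB _] := Facc X XF XB.
  move: hX; rewrite leqn0 cards_eq0 => /eqP eX; move: xXB.
  by rewrite eX in_setD in_set0 andbF.
have [x xXB X'F] := Facc X XF XB.
move: (xXB); rewrite in_setD => /andP [xB xX].
case: (eqVneq (X :\ x) B) => [e | ne].
  by exists x => //; rewrite -e setD1K.
apply: (IH (X :\ x)) => //.
move: hX; rewrite (cardsD1 x X) xX; lia.
Qed.


Lemma INR_mul (a b : nat) : INR (muln a b) = (INR a * INR b)%R. Proof. exact: mult_INR. Qed.

Lemma cube_ex B : exists W, [set B] = cube B W.
Proof.
exists set0; apply/setP => X; rewrite !inE setU0 eqEsubset andbC //.
Qed.

Lemma lower_abs n : forall F B, #|F| <= n -> AF F B ->
  (INR #|F| * ln (INR #|F|) <= 2 * ln 2 * INR (sB F B))%R /\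
  ((INR #|F| * ln (INR #|F|) = 2 * ln 2 * INR (sB F B))%R <-> exists W, F = cube B W).
Proof.
elim: n => [|n IH] F B hF hAF; have [FB Fsup Fun Facc] := hAF.
  by move: hF; rewrite leqn0 cards_eq0 => /eqP eF; move: FB; rewrite eF in_set0.
case: (boolP [exists X in F, X != B]) => [/existsP [X /andP [XF XB]] | none]; last first.
  have eF : F = [set B].
    apply/setP => X; rewrite inE; apply/idP/eqP => [XF | -> //].
    apply/eqP; apply/negPn/negP => XB; move/negP: none; apply.
    by apply/existsP; exists X; rewrite XF XB.
  rewrite eF /sB big_set1 setDv cards0 cards1 /= ln_1.
  split; first lra.
  split => [_ | _]; [exact: cube_ex | lra].
have [a aB aBF] := atom hAF XF XB.
pose A := [set X : {set V} | a \in X].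
pose F1 := F :&: A.
pose F0 := F :\: A.
have inF1 : forall X, (X \in F1) = (X \in F) && (a \in X) by move=> Y; rewrite !inE.
have inF0 : forall X, (X \in F0) = (X \in F) && (a \notin X) by move=> Y; rewrite !inE andbC.
have AF0 : AF F0 B.
  split.
  - by rewrite inF0 FB aB.
  - by move=> Y; rewrite inF0 => /andP [/Fsup].
  - move=> Y Z; rewrite !inF0 => /andP [YF aY] /andP [ZF aZ].
    by rewrite Fun // in_setU negb_or aY aZ.
  - move=> Y; rewrite inF0 => /andP [YF aY] YB.
    have [x xYB Y'F] := Facc Y YF YB; exists x => //.
    by rewrite inF0 Y'F in_setD1 negb_and aY orbT.
have AF1 : AF F1 (a |: B).
  split.
  - by rewrite inF1 aBF setU11.
  - move=> Y; rewrite inF1 => /andP [YF aY]; by rewrite subUset sub1set aY Fsup.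
  - move=> Y Z; rewrite !inF1 => /andP [YF aY] /andP [ZF aZ].
    by rewrite Fun // in_setU aY.
  - move=> Y; rewrite inF1 => /andP [YF aY] YaB.
    have YB : Y != B by apply/eqP => e; move: aY; rewrite e (negbTE aB).
    have [x xYB Y'F] := Facc Y YF YB.
    move: (xYB); rewrite in_setD => /andP [xB xY].
    case: (eqVneq x a) => [xa | xa].
      subst x.
      have Y'B : Y :\ a != B.
        apply: contraNneq YaB => e; by rewrite -e setD1K.
      have [y yY'B Y''F] := Facc _ Y'F Y'B.
      move: (yY'B); rewrite in_setD in_setD1 => /andP [yB /andP [ya yY]].
      exists y.
        by rewrite in_setD in_setU1 negb_or ya yB yY.
      have e : Y :\ y = (Y :\ a :\ y) :|: (a |: B).
        apply/setP => z; rewrite !inE.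
        case: (eqVneq z a) => [-> | za] /=; first by rewrite aY andbT orbT eq_sym ya.
        case zB : (z \in B); rewrite ?orbT ?orbF //.
        rewrite (subsetP (Fsup _ YF) _ zB) andbT; apply/eqP => e; move: yB; by rewrite -e zB.
      rewrite inF1; apply/andP; split; first by rewrite e; apply: Fun.
      by rewrite in_setD1 aY andbT eq_sym.
    exists x.
      by rewrite in_setD in_setU1 negb_or xa xB xY.
    by rewrite inF1 Y'F in_setD1 eq_sym xa aY.
have cF : #|F| = (#|F1| + #|F0|)%N by rewrite cardsID.
have F0lt : #|F0| <= n.
  have : #|F0| < #|F|.
    rewrite cF -{1}(add0n #|F0|) ltn_add2r; apply/card_gt0P; exists (a |: B); by rewrite inF1 aBF setU11.
  lia.
have F1lt : #|F1| <= n.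
  have : #|F1| < #|F|.
    rewrite cF -{1}(addn0 #|F1|) ltn_add2l; apply/card_gt0P; exists B; by rewrite inF0 FB aB.
  lia.
have sF : sB F B = (sB F0 B + sB F1 (a |: B) + #|F1|)%N.
  rewrite /sB (big_setID A) /= addnC -addnA; congr addn.
  rewrite -sum1_card -big_split /=; apply: eq_bigr => Y; rewrite inF1 => /andP [_ aY].
  rewrite (cardsD1 a (Y :\: B)) in_setD aY aB addnC /=; congr addn.
  apply: eq_card => z; rewrite !inE; by case: (z == a); case: (z \in B).
have img0 : forall Y, Y \in F0 -> a |: Y \in F1.
  move=> Y; rewrite inF0 inF1 => /andP [YF aY].
  have -> : a |: Y = Y :|: (a |: B).
    by rewrite setUCA (setUidPl (Fsup _ YF)).
  by rewrite Fun // !inE eqxx orbT.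
have inj0 : {in F0 &, injective (fun Y => a |: Y)}.
  move=> Y Z; rewrite !inF0 => /andP [_ aY] /andP [_ aZ] e.
  by rewrite -(setU1K aY) -(setU1K aZ) e.
have n01 : #|F0| <= #|F1|.
  rewrite -(card_in_imset inj0); apply: subset_leq_card; apply/subsetP => Y /imsetP [Z ZF0 ->].
  exact: img0.
have [IH0 IH0e] := IH F0 B F0lt AF0.
have [IH1 IH1e] := IH F1 (a |: B) F1lt AF1.
have n0pos : (0 < INR #|F0|)%R.
  apply: lt_0_INR; apply/ltP; apply/card_gt0P; exists B; by rewrite inF0 FB aB.
have n01R : (INR #|F0| <= INR #|F1|)%R by apply: le_INR; apply/leP.
have [RIle RIeq] := @RI (INR #|F0|) (INR #|F1|) n0pos n01R.
rewrite cF sF !INR_add in RIle RIeq *.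
rewrite (Rplus_comm (INR #|F1|) (INR #|F0|)).
set x0 := INR #|F0| in n0pos n01R IH0 IH0e RIle RIeq *.
set x1 := INR #|F1| in n01R IH1 IH1e RIle RIeq *.
have l2 := ln2_pos.
split; first lra.
split => [eq | [W eW]].
  have e0 : (x0 * ln x0 = 2 * ln 2 * INR (sB F0 B))%R by lra.
  have e1 : ((x0 + x1) * ln (x0 + x1) = x0 * ln x0 + x1 * ln x1 + 2 * ln 2 * x1)%R by lra.
  have ex := RIeq e1.
  have n0n1 : #|F0| = #|F1| by apply: INR_eq.
  have [W0 eW0] := IH0e.1 e0.
  exists (a |: W0).
  have eimg : [set a |: Y | Y in F0] = F1.
    apply/eqP; rewrite eqEcard card_in_imset // n0n1 leqnn andbT.
    by apply/subsetP => Y /imsetP [Z ZF0 ->]; exact: img0.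
  apply/setP => Y; rewrite [RHS]inE.
  case aY: (a \in Y).
    have Y'0 : (Y \in F) = (Y :\ a \in F0).
      apply/idP/idP => [YF | ].
        have : Y \in F1 by rewrite inF1 YF aY.
        rewrite -eimg => /imsetP [Z ZF0 eZ].
        have aZ : a \notin Z by move: ZF0; rewrite inF0 => /andP [].
        by rewrite eZ setU1K.
      move=> h; have : a |: (Y :\ a) \in F1 by rewrite -eimg; apply/imsetP; exists (Y :\ a).
      by rewrite setD1K // inF1 => /andP [].
    rewrite Y'0 eW0 inE.
    have aW : a \in B :|: (a |: W0) by rewrite !inE eqxx orbT.
    apply/andP/andP => [[h1 h2] | [h1 h2]].
      split; first by apply: subset_trans h1 (subD1set _ _).
      rewrite -(setD1K aY) subUset sub1set aW /=.
      apply: subset_trans h2 _; apply: setUS; exact: subsetUr.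
    split.
      apply/subsetP => z zB; rewrite in_setD1 (subsetP h1 _ zB) andbT.
      by apply: contraNneq aB => <-.
    apply/subsetP => z; rewrite in_setD1 => /andP [za zY].
    move: (subsetP h2 _ zY); rewrite !inE (negbTE za) /=; done.
  have -> : (Y \in F) = (Y \in F0) by rewrite inF0 aY andbT.
  rewrite eW0 inE; apply/andP/andP => [[h1 h2] | [h1 h2]]; split => //.
    apply: subset_trans h2 _; apply: setUS; exact: subsetUr.
  apply/subsetP => z zY; move: (subsetP h2 _ zY); rewrite !inE.
  case: (eqVneq z a) => [e | _]; last by [].
  by move: aY; rewrite -e zY.
have aW : a \in W.
  move: aBF; rewrite eW inE => /andP [_]; rewrite subUset sub1set => /andP [].
  by rewrite in_setU (negbTE aB).
have eF0 : F0 = cube B (W :\ a).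
  apply/setP => Y; rewrite inF0 eW !inE.
  apply/andP/andP => [[/andP [h1 h2] aY] | [h1 h2]].
    split => //; apply/subsetP => z zY; move: (subsetP h2 _ zY); rewrite !inE.
    case: (eqVneq z a) => [e | za]; first by move: aY; rewrite -e zY.
    by [].
  have aY : a \notin Y.
    by apply/negP => /(subsetP h2); rewrite !inE eqxx (negbTE aB).
  split => //; rewrite h1 /=; apply: subset_trans h2 _; apply: setUS; exact: subD1set.
have eF1 : F1 = cube (a |: B) W.
  apply/setP => Y; rewrite inF1 eW !inE.
  apply/andP/andP => [[/andP [h1 h2] aY] | [h1 h2]].
    split; first by rewrite subUset sub1set aY.
    apply: subset_trans h2 _; apply: setSU; exact: subsetUr.
  move: h1; rewrite subUset sub1set => /andP [aY BY]; rewrite BY aY; split => //.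
  rewrite /=; apply: subset_trans h2 _.
  by rewrite !subUset sub1set in_setU aW orbT subsetUl subsetUr.
have e0 := IH0e.2 (ex_intro _ _ eF0).
have e1 := IH1e.2 (ex_intro _ _ eF1).
have inj1 : {in F1 &, injective (fun Y => Y :\ a)}.
  move=> Y Z; rewrite !inF1 => /andP [_ aY] /andP [_ aZ] e.
  by rewrite -(setD1K aY) -(setD1K aZ) e.
have n10 : #|F1| <= #|F0|.
  rewrite -(card_in_imset inj1); apply: subset_leq_card; apply/subsetP => Y /imsetP [Z ZF1 ->].
  move: ZF1; rewrite inF1 inF0 => /andP [ZF aZ]; rewrite in_setD1 eqxx /= andbT.
  rewrite eW inE; move: ZF; rewrite eW inE => /andP [h1 h2].
  apply/andP; split; last by apply: subset_trans h2; exact: subD1set.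
  apply/subsetP => z zB; rewrite in_setD1 (subsetP h1 _ zB) andbT.
  by apply: contraNneq aB => <-.
have n0n1 : x0 = x1 by rewrite /x0 /x1; congr INR; apply/eqP; rewrite eqn_leq n01 n10.
have h := @RI_eq x0 n0pos.
rewrite -n0n1 in e1 *; lra.
Qed.

End AbsLow.


Lemma sum_eq_pointwise (I : finType) (P : pred I) (f g : I -> nat) :
  (forall i, P i -> f i <= g i) -> \sum_(i | P i) f i = \sum_(i | P i) g i ->
  forall i, P i -> f i = g i.
Proof.
move=> le eq i Pi; apply/eqP; rewrite eqn_leq le //=; rewrite leqNgt; apply/negP => lt.
move: eq; rewrite (bigD1 i Pi) [X in _ = X](bigD1 i Pi) /=.
have : \sum_(j | P j && (j != i)) f j <= \sum_(j | P j && (j != i)) g j.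
  by apply: leq_sum => j /andP [Pj _]; exact: le.
move: lt; clear; lia.
Qed.

Section AbsUp.
Variable V : finType.
Variables (F : {set {set V}}) (B : {set V}).
Hypothesis FB : B \in F.
Hypothesis Fsup : forall X, X \in F -> B \subset X.
Hypothesis Facc : forall X, X \in F -> X != B -> exists2 x, x \in X :\: B & X :\ x \in F.
Implicit Types X Y : {set V}.

Definition chain := forall X Y, X \in F -> Y \in F -> (X \subset Y) || (Y \subset X).

Definition pr X := [set Y in F | Y \proper X].

Lemma sizeB X x : x \in X :\: B -> #|X :\: B| = (#|(X :\ x) :\: B|).+1.
Proof.
move=> xXB; rewrite (cardsD1 x (X :\: B)) xXB add1n; congr S; apply: eq_card => y.
by rewrite !inE; case: (y == x); case: (y \in B); case: (y \in X).
Qed.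

Lemma acc_proper X x : x \in X :\: B -> X :\ x \proper X.
Proof.
move=> xXB; rewrite properEcard subD1set /=.
by rewrite (cardsD1 x X); move: xXB; rewrite in_setD => /andP [_ ->].
Qed.

Lemma ind_F (P : {set V} -> Prop) :
  P B -> (forall X x, X \in F -> X != B -> x \in X :\: B -> X :\ x \in F -> P (X :\ x) -> P X) ->
  forall X, X \in F -> P X.
Proof.
move=> PB Pst X; move: {2}#|X| (leqnn #|X|) => n; elim: n X => [|n IH] X hX XF.
  case: (eqVneq X B) => [-> // | XB].
  have [x xXB _] := Facc XF XB.
  by move: hX; rewrite leqn0 cards_eq0 => /eqP eX; move: xXB; rewrite eX in_setD in_set0 andbF.
case: (eqVneq X B) => [-> // | XB].
have [x xXB X'F] := Facc XF XB.
apply: (Pst X x) => //; apply: IH => //.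
have := proper_card (acc_proper xXB); lia.
Qed.

Lemma up_count X : X \in F -> #|X :\: B| <= #|pr X|.
Proof.
move: X; apply: (@ind_F (fun X => #|X :\: B| <= #|pr X|)) => [|X x XF XB xXB X'F IH]; first by rewrite setDv cards0.
rewrite (sizeB xXB).
have sub : (X :\ x) |: pr (X :\ x) \subset pr X.
  apply/subsetP => Y; rewrite in_setU1 => /orP [/eqP -> | ].
    by rewrite inE X'F acc_proper.
  rewrite !inE => /andP [YF Yp]; rewrite YF /=.
  apply: proper_sub_trans Yp _; exact: subD1set.
have := subset_leq_card sub; rewrite cardsU1 inE properxx andbF /= add1n => h.
exact: leq_ltn_trans IH h.
Qed.

Lemma chain_count X : chain -> X \in F -> #|pr X| <= #|X :\: B|.
Proof.
move=> ch; move: X; apply: (@ind_F (fun X => #|pr X| <= #|X :\: B|)) => [|X x XF XB xXB X'F IH].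
  rewrite setDv cards0 leqn0 cards_eq0; apply/eqP/setP => Y; rewrite !inE.
  apply/negbTE/negP => /andP [YF]; rewrite properE (Fsup YF) andbF //.
rewrite (sizeB xXB).
have sub : pr X \subset (X :\ x) |: pr (X :\ x).
  apply/subsetP => Y; rewrite !inE => /andP [YF YX].
  rewrite YF /=.
  case/orP: (ch _ _ YF X'F) => h.
    by rewrite properEneq h andbT; case: eqP.
  case: (eqVneq Y (X :\ x)) => //= ne.
  have p1 : X :\ x \proper Y by rewrite properEneq eq_sym ne h.
  have := proper_card p1; have := proper_card YX; rewrite (cardsD1 x X).
  by move: xXB; rewrite in_setD => /andP [_ ->]; lia.
have := subset_leq_card sub; rewrite cardsU1.
move: IH; clear; case: (_ \notin _) => /=; lia.
Qed.

Lemma pr_sum X : #|pr X| = \sum_(Y in F) (Y \proper X : nat).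
Proof.
rewrite -sum1_card big_mkcond [RHS]big_mkcond /=; apply: eq_bigr => Y _.
by rewrite inE; case: (Y \in F); case: (Y \proper X).
Qed.

Lemma pair_le X Y : (Y \proper X) + (X \proper Y) <= (X != Y).
Proof.
case: (eqVneq X Y) => [-> | ne]; first by rewrite properxx.
case: (boolP (Y \proper X)) => h; last by case: (X \proper Y).
case: (boolP (X \proper Y)) => h2 //.
by have := proper_trans h h2; rewrite properxx.
Qed.

Lemma ne_sum X : X \in F -> \sum_(Y in F) (X != Y : nat) = #|F|.-1.
Proof.
move=> XF; rewrite (bigD1 X) //= eqxx add0n.
rewrite (eq_bigr (fun _ => 1)) => [|Y /andP [_ YX]]; last by rewrite eq_sym YX.
rewrite (cardsD1 X F) XF add1n /= -sum1_card; apply: eq_bigl => Y.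
by rewrite !inE andbC.
Qed.

Definition T2 := \sum_(X in F) \sum_(Y in F) ((Y \proper X) + (X \proper Y) : nat).

Lemma T2_eq : T2 = 2 * \sum_(X in F) #|pr X|.
Proof.
rewrite /T2 mul2n -addnn.
rewrite (eq_bigr (fun X => \sum_(Y in F) (Y \proper X : nat) + \sum_(Y in F) (X \proper Y : nat))); last first.
  by move=> X _; rewrite big_split.
rewrite big_split /=; congr addn; first by apply: eq_bigr => X _; rewrite pr_sum.
rewrite exchange_big /=; by apply: eq_bigr => X _; rewrite pr_sum.
Qed.

Lemma T2_le : T2 <= #|F| * #|F|.-1.
Proof.
rewrite -sum_nat_const /T2; apply: leq_sum => X XF; rewrite -(ne_sum XF).
apply: leq_sum => Y _; exact: pair_le.
Qed.

Lemma upper_abs :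
  2 * \sum_(X in F) #|X :\: B| <= #|F| * #|F|.-1 /\
  (2 * \sum_(X in F) #|X :\: B| = #|F| * #|F|.-1 <-> chain).
Proof.
have h1 : \sum_(X in F) #|X :\: B| <= \sum_(X in F) #|pr X|.
  by apply: leq_sum => X XF; exact: up_count.
have h2 := T2_le; rewrite T2_eq in h2.
split; first by move: h1 h2; clear; lia.
split => [eq | ch].
  have eT : T2 = \sum_(X in F) #|F|.-1.
    by rewrite sum_nat_const T2_eq; move: h1 h2 eq; clear; lia.
  move=> X Y XF YF.
  have le1 : forall X, X \in F -> \sum_(Y in F) ((Y \proper X) + (X \proper Y) : nat) <= #|F|.-1.
    by move=> X0 X0F; rewrite -(ne_sum X0F); apply: leq_sum => Y0 _; exact: pair_le.
  have e1' := @sum_eq_pointwise _ (fun X => X \in F) (fun X => \sum_(Y in F) ((Y \proper X) + (X \proper Y) : nat)) (fun _ => #|F|.-1) le1 eT X XF.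
  have e2 := @sum_eq_pointwise _ (fun Y => Y \in F) (fun Y => ((Y \proper X) + (X \proper Y) : nat)) (fun Y => (X != Y : nat)) (fun Y _ => pair_le X Y).
  rewrite ne_sum // in e2.
  have e2' := e2 e1' Y YF.
  case: (eqVneq X Y) e2' => [-> _ | ne]; first by rewrite subxx.
  case: (boolP (Y \proper X)) => [/proper_sub -> | _]; first by rewrite orbT.
  by case: (boolP (X \proper Y)) => [/proper_sub -> | _].
have h3 : \sum_(X in F) #|X :\: B| = \sum_(X in F) #|pr X|.
  apply/eqP; rewrite eqn_leq h1 /=; apply: leq_sum => X XF; exact: chain_count.
rewrite h3 -T2_eq /T2 -sum_nat_const; apply: eq_bigr => X XF.
rewrite -(ne_sum XF); apply: eq_bigr => Y YF.
case: (eqVneq X Y) => [-> | ne]; first by rewrite properxx.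
case/orP: (ch _ _ XF YF) => h.
  have p : X \proper Y by rewrite properEneq ne h.
  rewrite p; case: (boolP (Y \proper X)) => // q.
  by have := proper_trans p q; rewrite properxx.
have p : Y \proper X by rewrite properEneq eq_sym ne h.
rewrite p; case: (boolP (X \proper Y)) => // q.
by have := proper_trans p q; rewrite properxx.
Qed.

End AbsUp.


Section Fam.
Variable V : finType.
Variables (k : nat) (S : {set V}) (E : {set {set V}}) (C : {set V}).
Hypothesis kt : ktree k S E.
Hypothesis k0 : 0 < k.
Hypothesis hC : nclique S E k C.

Lemma CS : C \subset S. Proof. by case: (ncliqueP hC). Qed.
Lemma cC : cliq E C. Proof. by case: (ncliqueP hC). Qed.
Lemma Ck : #|C| = k. Proof. by case: (ncliqueP hC). Qed.

Implicit Types X Y D Q : {set V}.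
Definition bl X := bld k E C X.

Lemma bl_sub X : bl X -> X \subset S.
Proof. exact: bld_sub kt k0 CS. Qed.

Lemma degen X w : bl X -> w \in S -> w \notin X -> #|nb E w :&: X| <= k.
Proof.
move=> bX wS wX.
have XS := bl_sub bX.
have kX : k <= #|X| by rewrite -Ck; apply: subset_leq_card; exact: bld_supC bX.
have wXS : w |: X \subset S by rewrite subUset sub1set wS XS.
have h1 := ktree_count_le kt wXS.
rewrite card_Ecedges_add // cardsU1 wX in h1.
have h2 := bld_count cC Ck bX.
have kX' : k <= (~~ false) + #|X| by rewrite /=; lia.
move: (h1 kX') h2; clear; lia.
Qed.

Lemma nb_eq_k X w : bl X -> w \in S -> w \notin X -> forall Y : {set V}, Y \subset X ->
  #|nb E w :&: Y| = k -> nb E w :&: X = nb E w :&: Y.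
Proof.
move=> bX wS wX Y YX hk; apply/eqP; rewrite eq_sym eqEcard setIS //= hk.
exact: degen.
Qed.

Lemma bl_union X Y : bl X -> bl Y -> bl (X :|: Y).
Proof.
move=> bX; elim => [|Y0 w bY0 IH wY0 hk hc].
  by rewrite (setUidPl (bld_supC bX)).
have wS : w \in S.
  have := bl_sub (bldS bY0 wY0 hk hc); rewrite subUset sub1set => /andP [].
  done.
rewrite setUCA.
case: (boolP (w \in X :|: Y0)) => wU.
  by rewrite (setUidPr _) // sub1set.
have e := nb_eq_k IH wS wU (subsetUr X Y0) hk.
apply: bldS => //; by rewrite e.
Qed.

Lemma bl_ktree X : bl X -> ktree k X (E :&: cedges X).
Proof.
elim => [|X0 w bX0 IH wX0 hk hc].
  rewrite (setIidPr (cliq_cedges cC)); apply: ktree_base; exact: Ck.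
rewrite Ecedges_add //; apply: ktree_step => //.
apply: ncliqueI => //; first exact: subsetIr.
move/cliqP: hc => h; apply/cliqP => a b aN bN ab.
rewrite in_setI h //= in_cedges2 ab andbT.
move: aN bN; rewrite !in_setI => /andP [_ ->] /andP [_ ->] //.
Qed.

Lemma bl_subk X : bl X -> (X, E :&: cedges X) \in subktrees k S E C.
Proof.
move=> bX; rewrite inE; apply/asboolP => /=; split; first exact: bl_sub.
split; first exact: subsetIl.
split; first exact: bl_ktree.
split; first exact: bld_supC bX.
rewrite subsetI cliq_cedges ?cC //=; apply: cedgesS; exact: bld_supC bX.
Qed.

Lemma subk_bl p : p \in subktrees k S E C -> p.2 = E :&: cedges p.1 /\ bl p.1.
Proof.
case: p => S' E'; rewrite inE => /asboolP /= [S'S [E'E [kt' [CS' cE']]]].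
have hC' : nclique S' E' k C by apply: ncliqueI => //; [exact: cedges_cliq | exact: Ck].
have b' := reroot kt' hC'.
have lift : forall X, bld k E' C X -> X \subset S' -> bl X /\ E :&: cedges X \subset E'.
  move=> X; elim => [_ | X0 w b0 IH wX0 hk hc].
    split; first exact: bld0.
    apply: subset_trans cE'; exact: subsetIr.
  rewrite subUset sub1set => /andP [wS' X0S'].
  have [bX0 sX0] := IH X0S'.
  have wS : w \in S := subsetP S'S _ wS'.
  have sub : nb E' w :&: X0 \subset nb E w :&: X0.
    apply: setSI; apply/subsetP => u; rewrite !inE; exact: (subsetP E'E).
  have e : nb E w :&: X0 = nb E' w :&: X0.
    apply/eqP; rewrite eq_sym eqEcard sub /= hk; exact: degen.
  split.
    apply: bldS => //; rewrite e //; exact: cliqE E'E hc.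
  rewrite Ecedges_add // subUset sX0 /= e.
  by apply/subsetP => x /imsetP [u]; rewrite in_setI in_nb => /andP [h _] ->.
have [bS' sS'] := lift S' b' (subxx _).
split => //=.
apply/eqP; rewrite eqEsubset sS' andbT subsetI E'E /=; exact: ktree_sub kt'.
Qed.

Definition F : {set {set V}} := [set X | `[< bl X >]].

Lemma inF X : (X \in F) = `[< bl X >].
Proof. by rewrite inE. Qed.

Lemma inFP X : reflect (bl X) (X \in F).
Proof. rewrite inF; exact: asboolP. Qed.

Lemma subk_eq : subktrees k S E C = [set (X, E :&: cedges X) | X in F].
Proof.
apply/setP => p; apply/idP/idP.
  move=> pin; have [e b] := subk_bl pin; apply/imsetP; exists p.1.
    by apply/inFP.
  by case: p pin e b => a b' /= _ -> _.
by move=> /imsetP [X /inFP bX ->]; exact: bl_subk.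
Qed.

Lemma ktN_eq : ktN k S E C = #|F|.
Proof.
rewrite /ktN subk_eq card_imset //; by move=> X Y [].
Qed.

Lemma ktsum_eq : \sum_(p in subktrees k S E C) #|p.1| = \sum_(X in F) #|X|.
Proof.
rewrite subk_eq big_imset //=; by move=> X Y _ _ [].
Qed.

Lemma F_C : C \in F. Proof. apply/inFP; exact: bld0. Qed.
Lemma F_sup X : X \in F -> C \subset X. Proof. by move/inFP/bld_supC. Qed.
Lemma F_union X Y : X \in F -> Y \in F -> X :|: Y \in F.
Proof. by move=> /inFP bX /inFP bY; apply/inFP; exact: bl_union. Qed.
Lemma F_acc X : X \in F -> X != C -> exists2 x, x \in X :\: C & X :\ x \in F.
Proof.
move=> /inFP bX; case: bX => [|X0 w bX0 wX0 _ _]; first by rewrite eqxx.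
move=> _; exists w.
  rewrite in_setD setU11 andbT; apply: contra wX0; exact: (subsetP (bld_supC bX0)).
apply/inFP; suff -> : (w |: X0) :\ w = X0 by [].
by rewrite setU1K.
Qed.
Lemma F_S : S \in F. Proof. apply/inFP; rewrite /bl; have := reroot kt hC; exact. Qed.
Lemma F_subS X : X \in F -> X \subset S. Proof. by move/inFP/bl_sub. Qed.


Lemma F_AF : AF F C.
Proof.
split; [exact: F_C | exact: F_sup | exact: F_union | exact: F_acc].
Qed.

Lemma nb_notin x : x \notin nb E x.
Proof.
rewrite in_nb setUid; apply/negP => /(subsetP (ktree_sub kt)).
by rewrite inE cards1 andbF.
Qed.

Lemma nb_subS x : nb E x \subset S.
Proof. by apply/subsetP => u; rewrite in_nb => /(edge_in kt) []. Qed.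

Lemma nb_sym x y : (y \in nb E x) = (x \in nb E y).
Proof. by rewrite !in_nb setUC. Qed.

Lemma nb_inS x y : y \in nb E x -> x \in S.
Proof. by rewrite in_nb => /(edge_in kt) []. Qed.

Lemma appear Y y : bl Y -> y \in Y -> y \notin C ->
  exists X0, [/\ bl X0, X0 \subset Y :\ y, #|nb E y :&: X0| = k & cliq E (nb E y :&: X0)].
Proof.
elim => [|Y0 w bY0 IH wY0 hk hc]; first by move=> -> .
rewrite in_setU1 => /orP [/eqP -> | yY0] yC.
  exists Y0; split => //; apply/subsetP => z zY0; rewrite in_setD1 in_setU1 zY0 orbT andbT.
  by apply/eqP => e; move: wY0; rewrite -e zY0.
have [X0 [b0 s0 h0 c0]] := IH yY0 yC; exists X0; split => //.
apply: subset_trans s0 _; apply: setSD; exact: subsetUr.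
Qed.

Lemma step_info X w : X \in F -> w \notin X -> w |: X \in F ->
  #|nb E w :&: X| = k /\ cliq E (nb E w :&: X).
Proof.
move=> /inFP bX wX /inFP bwX.
have wS : w \in S by apply: (subsetP (bl_sub bwX)); exact: setU11.
have wC : w \notin C by apply: contra wX; exact: (subsetP (bld_supC bX)).
have [X0 [b0 s0 h0 c0]] := appear bwX (setU11 w X) wC.
have s0' : X0 \subset X by apply: subset_trans s0 _; rewrite setU1K.
have e := nb_eq_k bX wS wX s0' h0.
by rewrite e.
Qed.

Lemma cliqU1 w D : cliq E D -> D \subset nb E w -> cliq E (w |: D).
Proof.
move=> /cliqP cD Dn; apply/cliqP => a b; rewrite !in_setU1.
case/orP => [/eqP -> | aD]; case/orP => [/eqP -> | bD]; rewrite ?eqxx //.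
- by move=> _; rewrite -in_nb (subsetP Dn).
- by move=> _; rewrite setUC -in_nb (subsetP Dn).
- exact: cD.
Qed.

Lemma ncl_step w D : w \in S -> D \subset nb E w -> cliq E D -> #|D| = k ->
  nclique S E k.+1 (w |: D).
Proof.
move=> wS Dn cD Dk; apply: ncliqueI.
- by rewrite subUset sub1set wS (subset_trans Dn (nb_subS w)).
- exact: cliqU1.
- rewrite cardsU1 Dk; suff -> : w \notin D by [].
  by apply: contra (nb_notin w); exact: (subsetP Dn).
Qed.

Lemma ncl_sub Q y : nclique S E k.+1 Q -> y \in Q -> Q \subset y |: nb E y.
Proof.
move=> /ncliqueP [_ /cliqP cQ _] yQ; apply/subsetP => q qQ; rewrite in_setU1.
case: (eqVneq q y) => //= qy; rewrite in_nb; apply: cQ => //; by rewrite eq_sym.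
Qed.

Lemma leaf_of y : y \in S -> #|nb E y| = k -> cliq E (nb E y) -> kleaf k S E y.
Proof.
move=> yS hk hc; rewrite /kleaf yS /=.
have -> : [set X | nclique S E k.+1 X && (y \in X)] = [set y |: nb E y].
  apply/setP => Q; rewrite !inE; apply/idP/idP.
    move=> /andP [hQ yQ]; rewrite eqEcard ncl_sub //=.
    have [_ _ ->] := ncliqueP hQ; rewrite cardsU1 (negbTE (nb_notin y)) hk //.
  move/eqP => ->; rewrite setU11 andbT; apply: ncl_step => //.
by rewrite cards1.
Qed.

Lemma nonleaf y (Q1 Q2 : {set V}) : nclique S E k.+1 Q1 -> nclique S E k.+1 Q2 -> y \in Q1 -> y \in Q2 ->
  Q1 != Q2 -> ~~ kleaf k S E y.
Proof.
move=> h1 h2 y1 y2 ne; rewrite /kleaf negb_and; apply/orP; right.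
have : 2 <= #|[set X | nclique S E k.+1 X && (y \in X)]|.
  have e2 := cards2 Q1 Q2; rewrite ne in e2; rewrite -e2; apply: subset_leq_card; apply/subsetP => Q.
  by rewrite !inE => /orP [] /eqP ->; rewrite ?h1 ?h2 ?y1 ?y2.
by case: (#|_|) => [|[|n]].
Qed.

Lemma clique_step X w : X \in F -> w \notin X -> w |: X \in F ->
  nclique S E k.+1 (w |: (nb E w :&: X)).
Proof.
move=> XF wX wXF; have [hk hc] := step_info XF wX wXF.
have wS : w \in S by apply: (subsetP (F_subS wXF)); exact: setU11.
apply: ncl_step => //; exact: subsetIl.
Qed.

Lemma deg_lemma Y : Y \in F -> k < #|Y| -> forall x, x \in Y -> k <= #|nb E x :&: Y|.
Proof.
move=> /inFP; elim => [|Y0 w bY0 IH wY0 hk hc]; first by rewrite Ck ltnn.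
move=> hY x; rewrite in_setU1 => /orP [/eqP -> | xY0].
  by rewrite -hk; apply: subset_leq_card; apply: setIS; exact: subsetUr.
case: (ltnP k #|Y0|) => hY0.
  apply: leq_trans (IH hY0 x xY0) _; apply: subset_leq_card; apply: setIS; exact: subsetUr.
have eY0 : Y0 = C.
  apply/eqP; rewrite eq_sym eqEcard (bld_supC bY0) Ck //.
subst Y0.
have eD : nb E w :&: C = C by apply/eqP; rewrite eqEcard subsetIr hk Ck leqnn.
have xw : x \in nb E w by move: xY0; rewrite -eD in_setI => /andP [].
have sub : w |: (C :\ x) \subset nb E x :&: (w |: C).
  apply/subsetP => z; rewrite in_setU1 in_setD1 => /orP [/eqP -> | /andP [zx zC]].
    by rewrite in_setI nb_sym xw setU11.
  rewrite in_setI in_setU1 zC orbT andbT in_nb.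
  move/cliqP: cC => h; apply: h => //; by rewrite eq_sym.
apply: leq_trans (subset_leq_card sub).
rewrite cardsU1 in_setD1 negb_and.
have -> : w \notin C by [].
have e1 := cardsD1 x C; rewrite xY0 Ck in e1; by rewrite orbT /= -e1.
Qed.

Lemma ext_exists X : X \in F -> X != S -> exists2 w, w \notin X & w |: X \in F.
Proof.
move=> XF XS.
have : forall Y, bl Y -> X :|: Y != X -> exists2 w, w \notin X & w |: X \in F.
  move=> Y; elim => [|Y0 w bY0 IH wY0 hk hc].
    by rewrite (setUidPl (F_sup XF)) eqxx.
  case: (eqVneq (X :|: Y0) X) => [e | ne]; last by move=> _; exact: IH.
  move=> ne2; have wX : w \notin X.
    apply: contra ne2 => wX; rewrite setUCA e; apply/eqP/setUidPr; by rewrite sub1set.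
  exists w => //.
  have -> : w |: X = X :|: (w |: Y0).
    by rewrite setUCA e.
  apply: F_union => //; apply/inFP; exact: bldS.
apply; first exact/inFP/F_S.
by rewrite (setUidPr (F_subS XF)) eq_sym.
Qed.

Lemma CT X t w : chain F -> X \in F -> t \notin X -> t |: X \in F ->
  w \notin t |: X -> w |: (t |: X) \in F -> t \in nb E w.
Proof.
move=> ch XF tX tXF wtX wtXF; apply/negPn/negP => tn.
have [hk hc] := step_info tXF wtX wtXF.
have e : nb E w :&: (t |: X) = nb E w :&: X.
  apply/setP => z; rewrite !in_setI in_setU1.
  by case: (eqVneq z t) => [-> | _]; rewrite ?(negbTE tn).
have wX : w \notin X by apply: contra wtX; rewrite in_setU1 => ->; rewrite orbT.
have wXF : w |: X \in F by apply/inFP; apply: bldS => //; [exact/inFP | rewrite -e | rewrite -e].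
case/orP: (ch _ _ wXF tXF).
  by rewrite subUset sub1set => /andP [h _]; move: wtX; rewrite h.
rewrite subUset sub1set in_setU1 => /andP [/orP [/eqP tw | tX'] _].
  by move: wtX; rewrite -tw setU11.
by move: tX; rewrite tX'.
Qed.


Lemma ext_C_nb x : x \notin C -> x |: C \in F -> C \subset nb E x.
Proof.
move=> xC xCF; have [hk _] := step_info F_C xC xCF.
have e : nb E x :&: C = C by apply/eqP; rewrite eqEcard subsetIr hk Ck leqnn.
by rewrite -e subsetIl.
Qed.

Lemma F_ind (P : {set V} -> Prop) : P C ->
  (forall X, X \in F -> C \subset X -> X \subset S -> X != C ->
     (forall Y, C \subset Y -> Y \subset S -> #|Y| < #|X| -> P Y) -> P X) ->
  forall X, C \subset X -> X \subset S -> X \in F -> P X.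
Proof. Abort.

Lemma kstar_iff : (exists W, F = cube C W) <-> is_kstar k S E C.
Proof.
split => [[W eW] | hs].
  have SW : S \subset C :|: W by move: F_S; rewrite eW inE => /andP [].
  have inFc : forall X, C \subset X -> X \subset S -> X \in F.
    move=> X h1 h2; rewrite eW inE h1 /=; exact: subset_trans h2 SW.
  have Cx : forall x, x \in S -> x \notin C -> C \subset nb E x.
    move=> x xS xC; apply: ext_C_nb => //; apply: inFc; first exact: subsetUr.
    by rewrite subUset sub1set xS CS.
  have Nxy : forall x y, x \in S -> y \in S -> x \notin C -> y \notin C -> x != y -> y \notin nb E x.
    move=> x y xS yS xC yC xy; apply/negP => yx.
    have YF : x |: (y |: C) \in F.
      apply: inFc; first by apply: subset_trans (subsetUr _ _) (subsetUr _ _).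
      by rewrite !subUset !sub1set xS yS CS.
    have YC : x |: (y |: C) != C by apply/negP => /eqP e; move: xC; rewrite -e setU11.
    have [z zYC Y'F] := F_acc YF YC.
    have hz : forall a b, a \notin C -> b \notin C -> a != b -> b \in nb E a ->
        a |: (b |: C) \in F -> (a |: (b |: C)) :\ a \in F -> False.
      move=> a b aC bC ab ba abF a'F.
      have aX : a \notin b |: C by rewrite in_setU1 negb_or aC andbT.
      rewrite setU1K // in a'F.
      have [hk _] := step_info a'F aX abF.
      have sub : b |: C \subset nb E a :&: (b |: C).
        by rewrite subsetI subxx andbT subUset sub1set ba (Cx a _ aC) //; apply: (nb_inS ba).
      by have := subset_leq_card sub; rewrite hk cardsU1 bC Ck add1n ltnn.
    move: zYC; rewrite in_setD !in_setU1 => /andP [zC /orP [/eqP ez | /orP [/eqP ez | zC']]].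
    - subst z; exact: hz xC yC xy yx YF Y'F.
    - subst z; apply: (hz y x) => //; first by rewrite eq_sym.
        by rewrite nb_sym.
      by rewrite setUCA.
      by rewrite setUCA.
    - by rewrite zC' in zC.
  rewrite /is_kstar CS Ck eqxx /=; apply/eqP/setP => e; rewrite in_setU.
  apply/idP/idP => [eE | ].
    have := subsetP (ktree_sub kt) _ eE => /cedgesP [a [b [aS bS ab ee]]].
    subst e.
    case aC: (a \in C); case bC: (b \in C).
    - by rewrite in_cedges2 aC bC ab.
    - apply/orP; right; apply/imset2P; exists b a; [by rewrite in_setD bC bS | by [] | by rewrite setUC].
    - apply/orP; right; apply/imset2P; exists a b => //.
      by rewrite in_setD aC aS.
    - have := Nxy a b aS bS (negbT aC) (negbT bC) ab; by rewrite in_nb eE.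
  case/orP.
    move/(subsetP (cliq_cedges cC)) => //.
  move=> /imset2P [u b]; rewrite in_setD => /andP [uC uS] bC ->.
  by rewrite -in_nb (subsetP (Cx u uS uC)).
move: hs; rewrite /is_kstar => /andP [/andP [_ _] /eqP hE].
have nbx : forall x, x \in S -> x \notin C -> nb E x = C.
  move=> x xS xC; apply/setP => u; rewrite in_nb hE in_setU.
  apply/idP/idP.
    case/orP.
      by rewrite in_cedges2 (negbTE xC).
    move=> /imset2P [u' b]; rewrite in_setD => /andP [u'C u'S] bC ee.
    have xin : x \in [set u'; b] by rewrite -ee setU11.
    move: xin; rewrite !inE => /orP [/eqP xu' | /eqP xb]; last by move: xC; rewrite xb bC.
    subst u'.
    have uin : u \in [set x; b] by rewrite -ee !inE eqxx orbT.
    move: uin; rewrite !inE => /orP [/eqP ux | /eqP -> //].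
    subst u; move: ee; rewrite setUid => ee.
    have : b \in [set x] by rewrite ee !inE eqxx orbT.
    by rewrite inE => /eqP bx; move: xC; rewrite -bx bC.
  move=> uC; apply/orP; right; apply/imset2P; exists x u => //.
  by rewrite in_setD xC xS.
exists S; apply/setP => X; rewrite [in RHS]inE (setUidPr CS).
apply/idP/idP => [XF | /andP [h1 h2]]; first by rewrite F_sup // F_subS.
move: {2}#|X| (leqnn #|X|) h1 h2 => n; elim: n X => [|n IH] X hX h1 h2.
  have : #|C| <= 0 by apply: leq_trans (subset_leq_card h1) hX.
  by rewrite Ck; case: k k0 => //.
case: (eqVneq X C) => [-> | XC]; first exact: F_C.
have : exists x, x \in X :\: C.
  apply/set0Pn; apply: contra XC; rewrite setD_eq0 => XC'.
  by rewrite eqEsubset XC' h1.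
case=> x; rewrite in_setD => /andP [xC xX].
have xS := subsetP h2 _ xX.
have X'F : X :\ x \in F.
  apply: IH.
  - by move: hX; rewrite (cardsD1 x X) xX add1n ltnS.
  - apply/subsetP => z zC; rewrite in_setD1 (subsetP h1 _ zC) andbT.
    by apply/eqP => e; move: xC; rewrite -e zC.
  - exact: subset_trans (subD1set _ _) h2.
have ex : nb E x :&: (X :\ x) = C.
  rewrite nbx //; apply/setIidPl/subsetP => z zC; rewrite in_setD1 (subsetP h1 _ zC) andbT.
  by apply/eqP => e; move: xC; rewrite -e zC.
rewrite -(setD1K xX); apply/inFP; apply: bldS.
- exact/inFP.
- by rewrite in_setD1 eqxx.
- by rewrite ex Ck.
- by rewrite ex cC.
Qed.


Definition lv X := [set y in X :\: C | X :\ y \in F].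

Lemma nb_restrict y : nb E y :&: (S :\ y) = nb E y.
Proof.
apply/setIidPl/subsetP => u un; rewrite in_setD1 (subsetP (nb_subS y) _ un) andbT.
by apply/eqP => e; move: (nb_notin y); rewrite -{1}e un.
Qed.

Lemma top_leaf y : y \in S -> y \notin C -> S :\ y \in F -> kleaf k S E y.
Proof.
move=> yS yC h.
have yX : y \notin S :\ y by rewrite in_setD1 eqxx.
have [hk hc] := step_info h yX (ltac:(by rewrite setD1K //; exact: F_S)).
rewrite nb_restrict in hk hc; exact: leaf_of.
Qed.

Lemma lv_S_sub : lv S \subset [set v in S | kleaf k S E v] :\: C.
Proof.
apply/subsetP => y; rewrite !inE => /andP [/andP [yC yS] h].
by rewrite yC yS top_leaf // inF.
Qed.

Lemma setD1U1 (w y : V) X : y != w -> (w |: X) :\ y = w |: (X :\ y).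
Proof.
move=> yw; apply/setP => z; rewrite !inE.
case: (eqVneq z w) => [-> | _] //=.
by rewrite eq_sym yw.
Qed.

Lemma lv_step X w : X \in F -> w \notin X -> w |: X \in F -> #|lv X| <= #|lv (w |: X)|.
Proof.
move=> XF wX wXF.
have wC : w \notin C by apply: contra wX; exact: (subsetP (F_sup XF)).
have wlv : w \in lv (w |: X) by rewrite inE in_setD setU11 wC setU1K.
have [hk hc] := step_info XF wX wXF.
case: (ltnP k.+1 #|X|) => hX; last first.
  have h1 : #|lv X| <= 1.
    apply: leq_trans (_ : #|X :\: C| <= 1).
      apply: subset_leq_card; apply/subsetP => y; rewrite inE => /andP [] //.
    have := cardsID C X; rewrite (setIidPr (F_sup XF)) Ck.
    move: hX; clear; lia.
  apply: leq_trans h1 _; apply/card_gt0P; by exists w.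
have sub : w |: (lv X :\: nb E w) \subset lv (w |: X).
  apply/subsetP => y; rewrite in_setU1 => /orP [/eqP -> // | ].
  rewrite in_setD !inE => /andP [yn /andP [/andP [yC yX] yF]].
  have yw : y != w by apply/eqP => e; move: wX; rewrite -e yX.
  rewrite yC yX orbT /= setD1U1 // -inF.
  have e : nb E w :&: (X :\ y) = nb E w :&: X.
    apply/setP => z; rewrite !inE.
    by case: (eqVneq z y) => [-> | _]; rewrite ?(negbTE yn) ?andbT.
  apply/inFP; apply: bldS.
  - by apply/inFP; rewrite inF.
  - by rewrite in_setD1 negb_and wX orbT.
  - by rewrite e.
  - by rewrite e.
have le1 : #|lv X :&: nb E w| <= 1.
  rewrite leqNgt; apply/negP => /card_gt1P [y [z [yin zin yz]]].
  move: yin zin; rewrite !in_setI !inE => /andP [/andP [/andP [yC yX] yF] yn] /andP [/andP [/andP [zC zX] zF] zn].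
  have zy : z \in nb E y.
    move/cliqP: hc => h; rewrite in_nb; apply: h; rewrite ?in_setI ?in_nb ?yn ?zn ?yX ?zX //.
  rewrite -inF in yF; rewrite -inF in zF.
  have zX' : z \notin X :\ z by rewrite in_setD1 eqxx.
  have [hkz _] := step_info zF zX' (ltac:(by rewrite setD1K)).
  have e : nb E z :&: (X :\ y) = (nb E z :&: (X :\ z)) :\ y.
    apply/setP => u; rewrite !inE.
    case: (eqVneq u z) => [-> | _] /=; last by case: ([set z; u] \in E); case: (u != y).
    have nz := nb_notin z; rewrite in_nb in nz; by rewrite (negbTE nz) /= ?andbF.
  have yin : y \in nb E z :&: (X :\ z).
    by rewrite in_setI nb_sym zy in_setD1 yX andbT; apply/eqP => e'; move: yz; rewrite e' eqxx.
  have hY : k < #|X :\ y| by move: hX; rewrite (cardsD1 y X) yX; clear; lia.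
  have zY : z \in X :\ y by rewrite in_setD1 zX andbT eq_sym.
  have := deg_lemma yF hY zY; rewrite e.
  have := cardsD1 y (nb E z :&: (X :\ z)); rewrite yin hkz.
  move: k0; clear; lia.
have wlvX : w \notin lv X :\: nb E w.
  rewrite in_setD negb_and; apply/orP; right; apply: contra wX.
  by rewrite inE in_setD => /andP [/andP [_ ->]].
have := subset_leq_card sub; rewrite cardsU1 wlvX.
have := cardsID (nb E w) (lv X).
move: le1; clear; lia.
Qed.

Lemma lv_mono X : X \in F -> #|lv X| <= #|lv S|.
Proof.
move=> XF.
have : forall Y, bl Y -> forall X, X \in F -> #|lv X| <= #|lv (X :|: Y)|.
  move=> Y; elim => [|Y0 w bY0 IH wY0 hk hc] X0 X0F.
    by rewrite (setUidPl (F_sup X0F)).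
  rewrite setUCA.
  case: (boolP (w \in X0 :|: Y0)) => wU.
    rewrite (setUidPr _) ?sub1set //; exact: IH.
  apply: leq_trans (IH _ X0F) _; apply: lv_step => //.
    by apply: F_union => //; apply/inFP.
  rewrite -setUCA; apply: F_union => //; apply/inFP; exact: bldS.
move/(_ S (reroot kt hC) X XF).
by rewrite (setUidPr (F_subS XF)).
Qed.

Lemma uniq_ext : #|lv S| <= 1 -> forall X a b, X \in F -> a \notin X -> b \notin X ->
  a |: X \in F -> b |: X \in F -> a = b.
Proof.
move=> h X a b XF aX bX aF bF; apply/eqP/negPn/negP => ab.
have YF : a |: (b |: X) \in F.
  have -> : a |: (b |: X) = (a |: X) :|: (b |: X).
    apply/setP => z; rewrite !inE; by case: (z == a); case: (z == b); case: (z \in X).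
  exact: F_union.
have aC : a \notin C by apply: contra aX; exact: (subsetP (F_sup XF)).
have bC : b \notin C by apply: contra bX; exact: (subsetP (F_sup XF)).
have sub : [set a; b] \subset lv (a |: (b |: X)).
  apply/subsetP => z; rewrite !inE => /orP [] /eqP ->.
    rewrite aC eqxx /= -inF setU1K //; by rewrite in_setU1 negb_or ab aX.
  rewrite bC eqxx orbT /= -inF setD1U1; last by rewrite eq_sym.
  by rewrite setU1K.
have := leq_trans (subset_leq_card sub) (lv_mono YF).
by rewrite cards2 ab; move: h; clear; lia.
Qed.

Lemma chain_of_uniq :
  (forall X a b, X \in F -> a \notin X -> b \notin X -> a |: X \in F -> b |: X \in F -> a = b) ->
  chain F.
Proof.
move=> U X Y XF YF; move: {2}(#|X| + #|Y|) (leqnn (#|X| + #|Y|)) => n.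
elim: n X Y XF YF => [|n IH] X Y XF YF hn.
  have : #|C| <= #|X| by apply: subset_leq_card; exact: F_sup.
  by rewrite Ck; move: hn k0; clear; lia.
case: (eqVneq X C) => [-> | XC]; first by rewrite F_sup.
case: (eqVneq Y C) => [-> | YC]; first by rewrite F_sup ?orbT.
have [x xXC X'F] := F_acc XF XC.
have [y yYC Y'F] := F_acc YF YC.
move: xXC yYC; rewrite !in_setD => /andP [_ xX] /andP [_ yY].
have cX : #|X| = (#|X :\ x|).+1 by rewrite (cardsD1 x X) xX.
have cY : #|Y| = (#|Y :\ y|).+1 by rewrite (cardsD1 y Y) yY.
have h1 := IH _ _ X'F YF ltac:(move: hn; rewrite cX; clear; lia).
have h2 := IH _ _ XF Y'F ltac:(move: hn; rewrite cY; clear; lia).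
case/orP: h1 => [h1 | h1]; last by rewrite (subset_trans h1 (subD1set _ _)) orbT.
case/orP: h2 => [h2 | h2]; first by rewrite (subset_trans h2 (subD1set _ _)).
case: (eqVneq (X :\ x) Y) => [e | ne1]; first by rewrite -e subD1set orbT.
case: (eqVneq (Y :\ y) X) => [e | ne2]; first by rewrite -e subD1set.
have p1 : X :\ x \proper Y by rewrite properEneq ne1 h1.
have p2 : Y :\ y \proper X by rewrite properEneq ne2 h2.
have c1 := proper_card p1; have c2 := proper_card p2.
have h3 := IH _ _ X'F Y'F ltac:(move: hn; rewrite cX cY; clear; lia).
have e : X :\ x = Y :\ y.
  case/orP: h3 => h3; apply/eqP; [rewrite eqEcard h3 /= | rewrite eq_sym eqEcard h3 /=];
    move: c1 c2; rewrite cX cY; clear; lia.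
have xX' : x \notin X :\ x by rewrite in_setD1 eqxx.
have yX' : y \notin X :\ x by rewrite e in_setD1 eqxx.
have exy := U _ x y X'F xX' yX' ltac:(by rewrite setD1K) ltac:(by rewrite e setD1K).
by rewrite -(setD1K xX) -(setD1K yY) -e exy subxx.
Qed.

Lemma pt_chain : k < #|S| -> path_type k S E -> simplicial k S E C -> chain F.
Proof.
move=> hS hp hs; apply: chain_of_uniq; apply: uniq_ext.
move: hp; rewrite /path_type => /orP [/orP [hK | hK] | h2].
- by move: hK hS; rewrite /is_K => /andP [/eqP -> _]; rewrite ltnn.
- move: hK; rewrite /is_K => /andP [/eqP hS1 _].
  apply: leq_trans (_ : #|S :\: C| <= 1).
    apply: subset_leq_card; apply/subsetP => y; rewrite inE => /andP [] //.
  have := cardsID C S; rewrite (setIidPr CS) Ck hS1; clear; lia.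
- move: hs; rewrite /simplicial => /existsP [v /andP [vC vl]].
  apply: leq_trans (subset_leq_card lv_S_sub) _.
  set L := [set v in S | kleaf k S E v] in h2 *.
  have vL : v \in L by rewrite inE vl andbT; move: vl; rewrite /kleaf => /andP [].
  have : L :\: C \subset L :\ v.
    apply/subsetP => z; rewrite !inE => /andP [zC ->]; rewrite andbT.
    by apply/eqP => e; move: zC; rewrite e vC.
  move/subset_leq_card; have := cardsD1 v L; rewrite vL (eqP h2); clear; lia.
Qed.


Lemma X1_facts v1 : v1 \notin C -> v1 |: C \in F ->
  [/\ cliq E (v1 |: C), v1 |: C \subset S, #|v1 |: C| = k.+1 & nclique S E k.+1 (v1 |: C)].
Proof.
move=> v1C v1F.
have CX1 := ext_C_nb v1C v1F.
have c1 : cliq E (v1 |: C) := cliqU1 cC CX1.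
have s1 : v1 |: C \subset S := F_subS v1F.
have h1 : #|v1 |: C| = k.+1 by rewrite cardsU1 v1C Ck.
by split => //; apply: ncliqueI.
Qed.

Lemma chain_pt : k < #|S| -> chain F -> path_type k S E /\ simplicial k S E C.
Proof.
move=> hS ch.
have SC : S != C by apply/negP => /eqP e; move: hS; rewrite e Ck ltnn.
have [v1 v1C v1F] := atom F_AF F_S SC.
have [cX1 X1S cardX1 nX1] := X1_facts v1C v1F.
set X1 := v1 |: C in cX1 X1S cardX1 nX1 v1F *.
have [c0 c0C] : exists c, c \in C.
  by apply/set0Pn; rewrite -card_gt0 Ck.
case: (eqVneq X1 S) => [eS | nS].
  split.
    rewrite /path_type /is_K; apply/orP; left; apply/orP; right.
    rewrite -{1}eS cardX1 eqxx /= eqEsubset (ktree_sub kt) /= -eS; exact: cliq_cedges.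
  apply/existsP; exists c0; rewrite c0C /=.
  have cS : c0 \in S by rewrite -eS in_setU1 c0C orbT.
  have e : nb E c0 = S :\ c0.
    apply/eqP; rewrite eqEsubset -{1}nb_restrict subsetIr /=.
    apply/subsetP => u; rewrite in_setD1 => /andP [uc uS]; rewrite in_nb.
    move: cX1; rewrite eS => /cliqP h; apply: h => //; by rewrite eq_sym.
  apply: leaf_of => //; first by rewrite e; have := cardsD1 c0 S; rewrite cS -{1}eS cardX1 add1n => -[->].
  by rewrite e; apply: cliqS (subD1set _ _) _; rewrite -eS.
have X1F : X1 \in F by [].
have [v2 v2X1 v2F] := ext_exists X1F nS.
have [hk2 hc2] := step_info X1F v2X1 v2F.
have v1D2 : v1 \in nb E v2 := CT ch F_C v1C v1F v2X1 v2F.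
set D2 := nb E v2 :&: X1 in hk2 hc2.
have [c cX1D2] : exists c, c \in X1 :\: D2.
  apply/set0Pn; rewrite -card_gt0 cardsD (setIidPr (subsetIr _ _ : D2 \subset X1)).
  by rewrite hk2 cardX1 subSnn.
move: cX1D2; rewrite in_setD => /andP [cD2 cX1'].
have cv1 : c != v1 by apply/eqP => e; move: cD2; rewrite e in_setI v1D2 setU11.
have cC : c \in C by move: cX1'; rewrite in_setU1 (negbTE cv1).
have eD2 : D2 = X1 :\ c.
  apply/eqP; rewrite eqEcard; apply/andP; split.
    apply/subsetP => u uD; rewrite in_setD1 (subsetP (subsetIr _ _) _ uD) andbT.
    by apply/eqP => e; move: cD2; rewrite -e uD.
  by rewrite hk2 -ltnS -cardX1 (cardsD1 c X1) cX1' add1n.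
have v2S : v2 \in S by apply: (subsetP (F_subS v2F)); exact: setU11.
(* c is a leaf *)
have key : forall n X0 w, #|X0| <= n -> X0 \in F -> w \notin X0 -> w |: X0 \in F ->
    w \notin X1 -> c \notin nb E w.
  elim => [|n IH] X0 w hn X0F wX0 wX0F wX1.
    have : #|C| <= #|X0| by apply: subset_leq_card; exact: F_sup.
    by rewrite Ck; move: hn k0; clear; lia.
  apply/negP => cw.
  case/orP: (ch _ _ wX0F X1F) => h.
    by move: wX1; rewrite (subsetP h _ (setU11 w X0)).
  have X1X0 : X1 \subset X0.
    apply/subsetP => x xX1; move: (subsetP h _ xX1); rewrite in_setU1.
    case/orP => [/eqP e | //]; by move: wX1; rewrite -e xX1.
  case: (eqVneq X0 X1) => [eX | neX].
    subst X0.
    have wv2 : w = v2.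
      case/orP: (ch _ _ wX0F v2F) => h'.
        move: (subsetP h' _ (setU11 w X1)); rewrite in_setU1 (negbTE wX1) orbF.
        by move/eqP.
      move: (subsetP h' _ (setU11 v2 X1)); rewrite in_setU1 (negbTE v2X1) orbF.
      by move/eqP.
    by move: cD2; rewrite /D2 in_setI -wv2 cw cX1'.
  have p : X1 \proper X0 by rewrite properEneq eq_sym neX X1X0.
  have X0C : X0 != C.
    apply/negP => /eqP e; move: p; rewrite e properE => /andP [_]; by rewrite subsetUr.
  have [t tX0C X0'F] := F_acc X0F X0C.
  move: tX0C; rewrite in_setD => /andP [tC tX0].
  have tX0' : t \notin X0 :\ t by rewrite in_setD1 eqxx.
  have tw : t \in nb E w.
    apply: (CT ch X0'F tX0'); rewrite setD1K //.
  have [_ hcw] := step_info X0F wX0 wX0F.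
  have ct : c \in nb E t.
    rewrite in_nb; move/cliqP: hcw => hh; apply: hh.
    - by rewrite in_setI tw tX0.
    - by rewrite in_setI cw (subsetP (F_sup X0F) _ cC).
    - by apply/eqP => e; move: tC; rewrite e cC.
  have tX1 : t \notin X1.
    rewrite in_setU1 negb_or tC andbT; apply/eqP => tv1; subst t.
    case/orP: (ch _ _ X0'F X1F) => h2.
      have e : X0 :\ v1 = X1.
        apply/eqP; rewrite eqEcard h2 /=; have := proper_card p; rewrite (cardsD1 v1 X0) tX0; clear; lia.
      by have := setU11 v1 C; rewrite -/X1 -e in_setD1 eqxx.
    by move: (subsetP h2 _ (setU11 v1 C)); rewrite in_setD1 eqxx.
  have hn' : #|X0 :\ t| <= n by move: hn; rewrite (cardsD1 t X0) tX0; clear; lia.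
  have tF : t |: (X0 :\ t) \in F by rewrite setD1K.
  by have := IH (X0 :\ t) t hn' X0'F tX0' tF tX1; rewrite ct.
have bS : bl S := reroot kt hC.
have nbc : nb E c \subset X1.
  apply/subsetP => u uc; case: (boolP (u \in X1)) => // uX1.
  have uS : u \in S := subsetP (nb_subS c) _ uc.
  have uC : u \notin C by apply: contra uX1; rewrite in_setU1 => ->; rewrite orbT.
  have [X0 [b0 s0 h0 c0']] := appear bS uS uC.
  have uX0 : u \notin X0 by apply/negP => /(subsetP s0); rewrite in_setD1 eqxx.
  have uX0F : u |: X0 \in F by apply/inFP; exact: bldS.
  have := key _ X0 u (leqnn _) (ltac:(exact/inFP)) uX0 uX0F uX1.
  by rewrite nb_sym uc.
have cleaf : kleaf k S E c.
  have e : nb E c = X1 :\ c.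
    apply/eqP; rewrite eqEsubset; apply/andP; split.
      apply/subsetP => u uc; rewrite in_setD1 (subsetP nbc _ uc) andbT.
      by apply/eqP => e; move: uc; rewrite e (negbTE (nb_notin c)).
    apply/subsetP => u; rewrite in_setD1 => /andP [uc uX]; rewrite in_nb.
    move/cliqP: cX1 => h; apply: h => //; by rewrite eq_sym.
  apply: leaf_of; first exact: (subsetP CS).
    by rewrite e; have := cardsD1 c X1; rewrite cX1' cardX1 add1n; case.
  by rewrite e; exact: cliqS (subD1set _ _) cX1.
have [l lSC lF] := F_acc F_S SC.
move: lSC; rewrite in_setD => /andP [lC lS].
have lleaf : kleaf k S E l := top_leaf lS lC lF.
have cl : c != l by apply/eqP => e; move: lC; rewrite -e cC.
have eL : [set v in S | kleaf k S E v] = [set c; l].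
  apply/eqP; rewrite eqEsubset; apply/andP; split; last first.
    by apply/subsetP => v; rewrite !inE => /orP [] /eqP ->; rewrite ?cleaf ?lleaf ?lS ?(subsetP CS _ cC).
  apply/subsetP => v; rewrite inE => /andP [vS vl]; rewrite !inE.
  case: (eqVneq v c) => //= vc.
  case: (boolP (v \in C)) => vC.
    have vD2 : v \in D2 by rewrite eD2 in_setD1 vc in_setU1 vC orbT.
    have nQ2 := clique_step X1F v2X1 v2F.
    have : ~~ kleaf k S E v.
      apply: (nonleaf nX1 nQ2); first by rewrite in_setU1 vC orbT.
        by rewrite in_setU1 vD2 orbT.
      apply/negP => /eqP e; move: v2X1; by rewrite e setU11.
    by rewrite vl.
  have [X0 [b0 s0 h0 c0']] := appear bS vS vC.
  have vX0 : v \notin X0 by apply/negP => /(subsetP s0); rewrite in_setD1 eqxx.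
  have X0F : X0 \in F by exact/inFP.
  have vX0F : v |: X0 \in F by apply/inFP; exact: bldS.
  case: (eqVneq (v |: X0) S) => [eS | nS'].
    have e0 : S :\ v = X0 by rewrite -eS setU1K.
    have cc : #|X0| = #|S :\ l|.
      rewrite -e0; have := cardsD1 v S; have := cardsD1 l S; rewrite vS lS; clear; lia.
    have : S :\ v = S :\ l.
      rewrite e0; case/orP: (ch _ _ X0F lF) => h; apply/eqP;
        [rewrite eqEcard h /= cc leqnn // | rewrite eq_sym eqEcard h /= cc leqnn //].
    move=> e; apply/negPn/negP => vl'.
    have : l \in S :\ v by rewrite in_setD1 eq_sym vl' lS.
    by rewrite e in_setD1 eqxx.
  have [w wvX0 wF] := ext_exists vX0F nS'.
  have vw : v \in nb E w := CT ch X0F vX0 vX0F wvX0 wF.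
  have nQ1 := clique_step X0F vX0 vX0F.
  have nQ2 := clique_step vX0F wvX0 wF.
  have : ~~ kleaf k S E v.
    apply: (nonleaf nQ1 nQ2); first exact: setU11.
      by rewrite in_setU1 in_setI vw setU11 orbT.
    apply/negP => /eqP e.
    have : w \in v |: (nb E v :&: X0) by rewrite e setU11.
    rewrite in_setU1 in_setI => /orP [/eqP wv | /andP [_ wX0]].
      by move: wvX0; rewrite wv setU11.
    by move: wvX0; rewrite in_setU1 wX0 orbT.
  by rewrite vl.
split.
  rewrite /path_type; apply/orP; right; rewrite eL cards2 cl //.
by apply/existsP; exists c; rewrite cC cleaf.
Qed.


Lemma div_le_iff (a b c : R) : (0 < c)%R -> ((a / c <= b / c)%R <-> (a <= b)%R).
Proof.
move=> cp; split => h.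
  have := Rmult_le_compat_r c _ _ (Rlt_le _ _ cp) h.
  by rewrite /Rdiv !Rmult_assoc Rinv_l ?Rmult_1_r //; apply: Rgt_not_eq.
apply: Rmult_le_compat_r => //; left; exact: Rinv_0_lt_compat.
Qed.

Lemma div_eq_iff (a b c : R) : (0 < c)%R -> ((a / c = b / c)%R <-> a = b).
Proof.
move=> cp; split => [h | ->] //.
have := f_equal (fun t => t * c)%R h.
by rewrite /Rdiv !Rmult_assoc Rinv_l ?Rmult_1_r //; apply: Rgt_not_eq.
Qed.

Lemma main_fam :
  ((INR k + log2 (INR (ktN k S E C)) / 2 <= ktmu k S E C)%R /\
   (ktmu k S E C <= (INR (ktN k S E C) + 2 * INR k - 1) / 2)%R) /\
  ((INR k + log2 (INR (ktN k S E C)) / 2)%R = ktmu k S E C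
     <-> is_kstar k S E C) /\
  ((k.+1 <= #|S|)%nat ->
     (ktmu k S E C = ((INR (ktN k S E C) + 2 * INR k - 1) / 2)%R
       <-> path_type k S E /\ simplicial k S E C)).
Proof.
have eN := ktN_eq.
have eSum : \sum_(p in subktrees k S E C) #|p.1| = addn (muln #|F| k) (sB F C).
  rewrite ktsum_eq /sB -sum_nat_const -big_split /=; apply: eq_bigr => X XF.
  by rewrite -(cardsID C X) (setIidPr (F_sup XF)) Ck.
have [low lowe] := lower_abs (leqnn #|F|) F_AF.
have [up upe] := upper_abs F_C F_sup F_acc.
rewrite /ktmu eSum eN.
set N := #|F| in low lowe up upe *; set s := sB F C in low lowe up upe *.
have N1 : 0 < N by apply/card_gt0P; exists C; exact: F_C.
have nR : (0 < INR N)%R by apply: lt_0_INR; apply/ltP.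
have l2 := ln2_pos.
have emu : (INR (addn (muln N k) s) / INR N = INR k + INR s / INR N)%R.
  rewrite INR_add INR_mul; field; lra.
rewrite emu.
have cpos : (0 < 2 * ln 2 * INR N)%R by apply: Rmult_lt_0_compat; lra.
have hlog : (log2 (INR N) / 2 = (INR N * ln (INR N)) / (2 * ln 2 * INR N))%R.
  rewrite /log2; field; split; lra.
have hs : (INR s / INR N = (2 * ln 2 * INR s) / (2 * ln 2 * INR N))%R by field; lra.
have [N' eN'] : exists N', N = N'.+1 by exists N.-1; rewrite prednK.
have NR1 : INR N.-1 = (INR N - 1)%R by rewrite eN' S_INR /=; lra.
have hup : ((INR N + 2 * INR k - 1) / 2 = INR k + (INR N * (INR N - 1)) / (2 * INR N))%R.
  field; lra.
have hs2 : (INR s / INR N = (2 * INR s) / (2 * INR N))%R by field; lra.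
have c2 : (0 < 2 * INR N)%R by lra.
have e2s : INR (muln 2 s) = (2 * INR s)%R by rewrite INR_mul.
have eNN : INR (muln N N.-1) = (INR N * (INR N - 1))%R by rewrite INR_mul NR1.
split; [split | split].
- rewrite hlog hs; apply: Rplus_le_compat_l; exact/div_le_iff.
- rewrite hup hs2; apply: Rplus_le_compat_l; apply/div_le_iff => //.
  rewrite -e2s -eNN; apply: le_INR; exact/leP.
- rewrite -kstar_iff -lowe hlog hs; split => h.
    apply/(div_eq_iff _ _ cpos); lra.
  by rewrite h.
- move=> hS; rewrite hup hs2; split => h.
    apply: chain_pt => //; apply/upe; apply: INR_eq; rewrite e2s eNN.
    apply/(div_eq_iff _ _ c2); lra.
  have := (upe.2 (pt_chain hS h.1 h.2)) => e.
  have : INR (muln 2 s) = INR (muln N N.-1) by rewrite e.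
  by rewrite e2s eNN => ->.
Qed.

End Fam.
Theorem lemma4p2 (V : finType) (k : nat) (S : {set V}) (E : {set {set V}})
    (C : {set V}) :
  (0 < k)%nat -> ktree k S E -> nclique S E k C ->
  ((INR k + log2 (INR (ktN k S E C)) / 2 <= ktmu k S E C)%R /\
   (ktmu k S E C <= (INR (ktN k S E C) + 2 * INR k - 1) / 2)%R) /\
  ((INR k + log2 (INR (ktN k S E C)) / 2)%R = ktmu k S E C
     <-> is_kstar k S E C) /\
  ((k.+1 <= #|S|)%nat ->
     (ktmu k S E C = ((INR (ktN k S E C) + 2 * INR k - 1) / 2)%R
       <-> path_type k S E /\ simplicial k S E C)).
Proof.
move=> k0 kt hC; exact: (main_fam kt k0 hC).
Qed.
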